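(* Let $\mathfrak{S}=(\mathcal{X},\mathsf{S},\gamma,(\Lambda_{a})_{a\in\mathcal{A}})$ be a spectral decomposition system for the Euclidean space $\mathfrak{H}$ with spectral-induced ordering mapping $\tau$. Then: (i) $\tau\circ\gamma=\gamma$ and, for every $a\in\mathcal{A}$, $\gamma\circ\Lambda_a\circ\gamma=\gamma$; (ii) the range of $\gamma$ equals the range of $\tau$ and is a closed convex cone in $\mathcal{X}$; (iii) for all $X\in\mathfrak{H}$ and $a\in\mathcal{A}$, $\|X\|=\|\Lambda_a\gamma(X)\|=\|\gamma(X)\|$; (iv) $\|\gamma(X)-\gamma(Y)\|\leq\|X-Y\|$ for all $X,Y\in\mathfrak{H}$; (v) $\gamma(\alpha X)=\alpha\gamma(X)$ for all $X\in\mathfrak{H}$ and $\alpha\in[0,+\infty)$; (vi) $\gamma(-X)\in-\mathsf{S}\cdot\gamma(X)$ for all $X\in\mathfrak{H}$.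
   Context: A Euclidean space is a finite-dimensional real inner product space; inner products are written $\langle\cdot,\cdot\rangle$ and norms $\|\cdot\|$. Let $\mathfrak{H}$ and $\mathcal{X}$ be Euclidean spaces, let $\mathsf{S}$ be a group acting on $\mathcal{X}$ by linear isometries, let $\gamma\colon\mathfrak{H}\to\mathcal{X}$, and let $(\Lambda_a)_{a\in\mathcal{A}}$ be a family of linear operators from $\mathcal{X}$ to $\mathfrak{H}$. The orbit of $x$ is $\mathsf{S}\cdot x=\{s\cdot x: s\in\mathsf{S}\}$, and $-\mathsf{S}\cdot x=\{-s\cdot x: s\in\mathsf{S}\}$; a map $f$ on $\mathcal{X}$ is $\mathsf{S}$-invariant if $f(s\cdot x)=f(x)$ for all $s,x$. The tuple is a spectral decomposition system for $\mathfrak{H}$ if: [A] every $\Lambda_a$ is an isometry; [B] there exists an $\mathsf{S}$-invariant $\tau\colon\mathcal{X}\to\mathcal{X}$ with $\tau(x)\in\mathsf{S}\cdot x$ for all $x$ and $\gamma\circ\Lambda_a=\tau$ for all $a$; [C] for every $X\in\mathfrak{H}$ there is $a$ with $X=\Lambda_a\gamma(X)$; [D] $\langle X,Y\rangle\leq\langle\gamma(X),\gamma(Y)\rangle$ for all $X,Y\in\mathfrak{H}$. The map $\tau$ in [B] is the spectral-induced ordering mapping. *)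

(* Defs.v *)
(* Euclidean spaces as finite-dimensional vector spaces
   (vectType) over a real field R : realType, equipped with an inner product. *)
From HB Require Import structures.
From mathcomp Require Import all_boot all_order all_algebra.
From mathcomp Require Import reals.
Set Implicit Arguments. Unset Strict Implicit. Unset Printing Implicit Defensive.
Import Order.TTheory GRing.Theory Num.Theory.
Local Open Scope ring_scope.

Section Euclid.
Variable R : realType.

Definition is_inner_product (V : vectType R) (ip : V -> V -> R) : Prop :=
  [/\ (forall x y, ip x y = ip y x),
      (forall (a : R) x y z, ip (a *: x + y) z = a * ip x z + ip y z)
    & (forall x, x != 0 -> 0 < ip x x)].

Definition ipnorm (V : vectType R) (ip : V -> V -> R) (x : V) : R :=
  Num.sqrt (ip x x).

Definition ip_closed (V : vectType R) (ip : V -> V -> R) (C : V -> Prop) : Prop :=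
  forall x, (forall e : R, 0 < e -> exists2 c, C c & ipnorm ip (x - c) < e) -> C x.

Definition convex_set (V : vectType R) (C : V -> Prop) : Prop :=
  forall x y (t : R), C x -> C y -> 0 <= t <= 1 -> C (t *: x + (1 - t) *: y).

(* cone in the sense of Bauschke--Combettes: C = R_{++} C *)
Definition cone_set (V : vectType R) (C : V -> Prop) : Prop :=
  forall x (a : R), C x -> 0 < a -> C (a *: x).

Definition is_group (S : Type) (mul : S -> S -> S) (one : S) (inv : S -> S) : Prop :=
  [/\ (forall a b c, mul a (mul b c) = mul (mul a b) c),
      (forall a, mul one a = a /\ mul a one = a)
    & (forall a, mul (inv a) a = one /\ mul a (inv a) = one)].

Definition is_isometric_action (X : vectType R) (ipX : X -> X -> R)
  (S : Type) (mul : S -> S -> S) (one : S) (inv : S -> S)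
  (act : S -> {linear X -> X}) : Prop :=
  [/\ is_group mul one inv,
      (forall x, act one x = x),
      (forall s t x, act (mul s t) x = act s (act t x))
    & (forall s x, ipnorm ipX (act s x) = ipnorm ipX x)].

Definition orbit (X : vectType R) (S : Type) (act : S -> {linear X -> X}) (x : X)
  : X -> Prop := fun y => exists s, y = act s x.

Definition neg_orbit (X : vectType R) (S : Type) (act : S -> {linear X -> X}) (x : X)
  : X -> Prop := fun y => exists s, y = - act s x.

Definition S_invariant (X : vectType R) (S : Type) (act : S -> {linear X -> X})
  (f : X -> X) : Prop := forall s x, f (act s x) = f x.

Definition is_SIOM (H X : vectType R) (S : Type) (act : S -> {linear X -> X})
  (gamma : H -> X) (A : Type) (Lambda : A -> {linear X -> H}) (tau : X -> X) : Prop :=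
  [/\ S_invariant act tau,
      (forall x, orbit act x (tau x))
    & (forall a x, gamma (Lambda a x) = tau x)].

Definition spectral_decomposition_system (H : vectType R) (ipH : H -> H -> R)
  (X : vectType R) (ipX : X -> X -> R) (S : Type) (act : S -> {linear X -> X})
  (gamma : H -> X) (A : Type) (Lambda : A -> {linear X -> H}) : Prop :=
  [/\ (forall a x, ipnorm ipH (Lambda a x) = ipnorm ipX x),          (* [A] *)
      (exists tau, is_SIOM act gamma Lambda tau),                     (* [B] *)
      (forall Y : H, exists a, Y = Lambda a (gamma Y))                (* [C] *)
    & (forall Y Z : H, ipH Y Z <= ipX (gamma Y) (gamma Z))].          (* [D] *)

End Euclid.

(* Main.v *)
Require Import Defs.
From HB Require Import structures.
From mathcomp Require Import all_boot all_order all_algebra.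
From mathcomp Require Import reals lra.
Import Order.TTheory GRing.Theory Num.Theory.
Local Open Scope ring_scope.

Section IP.
Local Set Implicit Arguments.
Variable R : realType.
Variable V : vectType R.
Variable ip : V -> V -> R.
Hypothesis hip : is_inner_product ip.

Lemma ipC x y : ip x y = ip y x. Proof. by case: hip. Qed.
Lemma ipL a x y z : ip (a *: x + y) z = a * ip x z + ip y z. Proof. by case: hip. Qed.
Lemma ipDl x y z : ip (x + y) z = ip x z + ip y z.
Proof. by have := ipL 1 x y z; rewrite scale1r mul1r. Qed.
Lemma ip0l z : ip 0 z = 0.
Proof. have := ipDl 0 0 z; rewrite addr0 => h. lra. Qed.
Lemma ipZl a x z : ip (a *: x) z = a * ip x z.
Proof. by rewrite -[a *: x]addr0 ipL ip0l addr0. Qed.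
Lemma ipNl x z : ip (- x) z = - ip x z.
Proof. by rewrite -scaleN1r ipZl mulN1r. Qed.
Lemma ipDr x y z : ip z (x + y) = ip z x + ip z y.
Proof. by rewrite ipC ipDl !(ipC z). Qed.
Lemma ipZr a x z : ip z (a *: x) = a * ip z x.
Proof. by rewrite ipC ipZl ipC. Qed.
Lemma ipNr x z : ip z (- x) = - ip z x.
Proof. by rewrite ipC ipNl ipC. Qed.
Lemma ip_ge0 x : 0 <= ip x x.
Proof. have [->|nz] := eqVneq x 0; first by rewrite ip0l. case: hip => _ _ h. exact/ltW/h. Qed.
Lemma ip_eq0 x : ip x x <= 0 -> x = 0.
Proof. move=> h; apply/eqP; apply/negPn/negP => nz; case: hip => _ _ /(_ _ nz) h'. lra. Qed.
Lemma ipnorm_sq x : ipnorm ip x ^+ 2 = ip x x.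
Proof. by rewrite /ipnorm sqr_sqrtr // ip_ge0. Qed.
Lemma ipnorm_ge0 x : 0 <= ipnorm ip x. Proof. exact: sqrtr_ge0. Qed.
Lemma ip_expD x y : ip (x + y) (x + y) = ip x x + 2 * ip x y + ip y y.
Proof. rewrite ipDl !ipDr (ipC y x). lra. Qed.
Lemma ip_expB x y : ip (x - y) (x - y) = ip x x - 2 * ip x y + ip y y.
Proof. rewrite ip_expD ipNr ipNl ipNr opprK. lra. Qed.
Lemma ipnorm_le x y : ip x x <= ip y y -> ipnorm ip x <= ipnorm ip y.
Proof. by move=> h; rewrite /ipnorm ler_sqrt // ip_ge0. Qed.
Lemma ipnorm_eqsq x y : ipnorm ip x = ipnorm ip y -> ip x x = ip y y.
Proof. by move=> h; rewrite -!ipnorm_sq h. Qed.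
Lemma ip_par x y : ip (x + y) (x + y) <= 2 * ip x x + 2 * ip y y.
Proof. have := ip_ge0 (x - y); rewrite ip_expB ip_expD. lra. Qed.
End IP.

Theorem proposition3p5 (R : realType)
  (H : vectType R) (ipH : H -> H -> R) (X : vectType R) (ipX : X -> X -> R)
  (S : Type) (mul : S -> S -> S) (one : S) (inv : S -> S)
  (act : S -> {linear X -> X})
  (gamma : H -> X) (A : Type) (Lambda : A -> {linear X -> H}) (tau : X -> X) :
  is_inner_product ipH -> is_inner_product ipX ->
  is_isometric_action ipX mul one inv act ->
  spectral_decomposition_system ipH ipX act gamma Lambda ->
  is_SIOM act gamma Lambda tau ->
  (* (i) *)
  ((forall Y : H, tau (gamma Y) = gamma Y) /\
   (forall a (Y : H), gamma (Lambda a (gamma Y)) = gamma Y)) /\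
  (* (ii) *)
  ((forall x : X, (exists Y : H, gamma Y = x) <-> (exists z : X, tau z = x)) /\
   ip_closed ipX (fun x => exists Y : H, gamma Y = x) /\
   convex_set (fun x => exists Y : H, gamma Y = x) /\
   cone_set (fun x => exists Y : H, gamma Y = x)) /\
  (* (iii) *)
  (forall (Y : H) a,
     ipnorm ipH Y = ipnorm ipH (Lambda a (gamma Y)) /\
     ipnorm ipH (Lambda a (gamma Y)) = ipnorm ipX (gamma Y)) /\
  (* (iv) *)
  (forall Y Z : H, ipnorm ipX (gamma Y - gamma Z) <= ipnorm ipH (Y - Z)) /\
  (* (v) *)
  (forall (Y : H) (alpha : R), 0 <= alpha -> gamma (alpha *: Y) = alpha *: gamma Y) /\
  (* (vi) *)
  (forall Y : H, neg_orbit act (gamma Y) (gamma (- Y))).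
Proof.
move=> hH hX hact [hA _ hC hD] [tinv torb tL].
have tg : forall Y, tau (gamma Y) = gamma Y.
  by move=> Y; have [a ha] := hC Y; rewrite -(tL a) -ha.
have gLg : forall a Y, gamma (Lambda a (gamma Y)) = gamma Y by move=> a Y; rewrite tL tg.
have [a0 _] := hC 0.
have sqE : forall a b : R, 0<=a -> 0<=b -> Num.sqrt a = Num.sqrt b -> a = b.
  by move=> a b ha hb e; rewrite -(sqr_sqrtr ha) -(sqr_sqrtr hb) e.
have qA : forall a x, ipH (Lambda a x) (Lambda a x) = ipX x x.
  by move=> a x; apply: sqE; rewrite ?(ip_ge0 hH) ?(ip_ge0 hX) //; apply: hA.
have ipA : forall a x y, ipH (Lambda a x) (Lambda a y) = ipX x y.
  move=> a x y; have := qA a (x + y); rewrite linearD /= (ip_expD hH) (ip_expD hX) !qA. lra.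
have nG : forall Y, ipnorm ipH Y = ipnorm ipX (gamma Y).
  by move=> Y; have [a ha] := hC Y; rewrite {1}ha hA.
have qG : forall Y, ipX (gamma Y) (gamma Y) = ipH Y Y.
  by move=> Y; apply: sqE; rewrite ?(ip_ge0 hH) ?(ip_ge0 hX) //; symmetry; apply: nG.
have lipq : forall Y Z, ipX (gamma Y - gamma Z) (gamma Y - gamma Z) <= ipH (Y - Z) (Y - Z).
  move=> Y Z; rewrite (ip_expB hX) (ip_expB hH) !qG; have := hD Y Z. lra.
have homo : forall (Y : H) (alpha : R), 0 <= alpha -> gamma (alpha *: Y) = alpha *: gamma Y.
  move=> Y al hal; apply/eqP; rewrite -subr_eq0; apply/eqP; apply: (ip_eq0 hX).
  rewrite (ip_expB hX) !(ipZr hX) !(ipZl hX) !qG !(ipZl hH) !(ipZr hH).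
  have := hD (al *: Y) Y; rewrite (ipZl hH).
  set u := ipX _ _ => h. have : al * (al * ipH Y Y) <= al * u by rewrite ler_wpM2l.
  nra.
have addg : forall Y Z, exists W, gamma W = gamma Y + gamma Z.
  move=> Y Z; set x := gamma Y; set y := gamma Z.
  exists (Lambda a0 (x + y)); apply/eqP; rewrite -subr_eq0; apply/eqP; apply: (ip_eq0 hX).
  rewrite (ip_expB hX) qG qA (ipDr hX).
  have := hD (Lambda a0 (x + y)) (Lambda a0 x); rewrite ipA gLg.
  have := hD (Lambda a0 (x + y)) (Lambda a0 y); rewrite ipA gLg.
  rewrite (ipDr hX). lra.
split; first by split.
split.
  split.
    move=> x; split; first by move=> [Y <-]; exists (gamma Y); exact: tg.
    by move=> [z <-]; exists (Lambda a0 z); exact: tL.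
  split.
    move=> x hx; exists (Lambda a0 x); rewrite tL.
    apply/eqP; rewrite -subr_eq0; apply/eqP; apply: (ip_eq0 hX).
    rewrite leNgt; apply/negP => qpos.
    set d := tau x - x.
    have ep : 0 < Num.sqrt (ipX d d) / 4 by rewrite divr_gt0 // sqrtr_gt0.
    have [c [Y <-] hc] := hx _ ep.
    have hq : ipX (x - gamma Y) (x - gamma Y) < ipX d d / 16.
      rewrite -(ipnorm_sq hX).
      have h0 : 0 <= ipnorm ipX (x - gamma Y) by apply: sqrtr_ge0.
      have hs : Num.sqrt (ipX d d) ^+ 2 = ipX d d by rewrite sqr_sqrtr // ltW.
      move: hc hs h0; set n := ipnorm _ _; set s := Num.sqrt _ => hc hs h0.
      rewrite -hs. nra.
    have e1 : d = (gamma (Lambda a0 x) - gamma (Lambda a0 (gamma Y))) + (gamma Y - x).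
      by rewrite /d -(tL a0) gLg; rewrite addrA subrK.
    have h1 := ip_par hX (gamma (Lambda a0 x) - gamma (Lambda a0 (gamma Y))) (gamma Y - x).
    rewrite -e1 in h1.
    have h2 := lipq (Lambda a0 x) (Lambda a0 (gamma Y)).
    rewrite -linearB /= qA in h2.
    have h3 : ipX (gamma Y - x) (gamma Y - x) = ipX (x - gamma Y) (x - gamma Y).
      rewrite !(ip_expB hX) (ipC hX x). lra.
    lra.
  split.
    move=> x y t [Y <-] [Z <-] /andP[t0 t1].
    by rewrite -homo // -homo ?subr_ge0.
  by move=> x a [Y <-] ap; exists (a *: Y); rewrite homo // ltW.
split.
  by move=> Y a; rewrite hA nG.
split.
  by move=> Y Z; rewrite /ipnorm ler_sqrt ?(ip_ge0 hH) //; exact: lipq.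
split; first exact: homo.
move=> Y; have [a ha] := hC Y.
have -> : - Y = Lambda a (- gamma Y) by rewrite linearN /= -ha.
rewrite tL; have [s ->] := torb (- gamma Y).
by exists s; rewrite linearN.
Qed.
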